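(* Let $(G,k)$ be an instance of \textsc{Bicolored $P_3$ Deletion} and let $u,v,w,z_1,z_2$ be vertices such that $G[\{u,v,w,z_1,z_2\}]$ is a CC-Hourglass (with the vertex labels as in the definition). Then $(G,k)$ is a yes-instance if and only if at least one of $(G-\{v,w\},k-1)$, $(G-\{\{u,v\},\{v,z_1\}\},k-2)$, $(G-\{\{u,v\},\{u,z_1\},\{v,z_2\}\},k-3)$ is a yes-instance.
   Context: A two-colored graph $G=(V,E_r,E_b)$ is a finite simple undirected graph whose edge set $E=E_r\uplus E_b$ is partitioned into red and blue edges; $G-F$ removes the edges in $F$ (and $G-\{v,w\}$ removes the single edge $\{v,w\}$). A bicolored $P_3$ is an induced subgraph on three vertices $a,b,c$ with edges $\{a,b\},\{b,c\}$ of different colors and $\{a,c\}\notin E$. A CC-Hourglass on $u,v,w,z_1,z_2$ is an induced subgraph whose edges are exactly $\{u,v\}$ blue, $\{v,w\}$ red, $\{u,z_1\}$ blue, $\{v,z_1\}$ red, $\{v,z_2\}$ blue, $\{w,z_2\}$ red, or the same with the two colors swapped. \textsc{Bicolored $P_3$ Deletion}: given $G$ and an integer $k$, decide whether some $S\subseteq E$ with $|S|\le k$ makes $G-S$ free of induced bicolored $P_3$s (no-instance if $k<0$). *)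

(* Defs.v *)
From mathcomp Require Import all_boot all_order all_algebra.
Set Implicit Arguments. Unset Strict Implicit. Unset Printing Implicit Defensive.
Import GRing.Theory Num.Theory.

(* A two-colored graph on a finite vertex type T: red and blue edge sets,
   each edge an unordered pair {x,y} with x <> y (a 2-element set),
   and the two edge sets disjoint. *)
Record tcgraph (T : finType) := TCGraph {
  red : {set {set T}};
  blue : {set {set T}} }.

Definition wf_tcgraph (T : finType) (G : tcgraph T) : Prop :=
  (forall e, e \in red G :|: blue G -> #|e| = 2) /\
  [disjoint red G & blue G].

Definition edges (T : finType) (G : tcgraph T) : {set {set T}} := red G :|: blue G.

Definition del_edges (T : finType) (G : tcgraph T) (F : {set {set T}}) : tcgraph T :=
  TCGraph (red G :\: F) (blue G :\: F).

Definition bicolored_P3 (T : finType) (G : tcgraph T) (a b c : T) : Prop :=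
  [/\ a != b, b != c, a != c,
      (([set a; b] \in red G /\ [set b; c] \in blue G) \/
       ([set a; b] \in blue G /\ [set b; c] \in red G))
    & [set a; c] \notin edges G].

Definition P3_free (T : finType) (G : tcgraph T) : Prop :=
  forall a b c, ~ bicolored_P3 G a b c.

(* yes-instance of Bicolored P3 Deletion (no-instance when k < 0) *)
Definition yes_instance (T : finType) (G : tcgraph T) (k : int) : Prop :=
  exists S : {set {set T}}, S \subset edges G /\ (#|S|%:Z <= k)%R /\
    P3_free (del_edges G S).

Definition induced_exactly (T : finType) (G : tcgraph T) (X : {set T})
    (R B : {set {set T}}) : Prop :=
  forall x y, x \in X -> y \in X -> x != y ->
    ([set x; y] \in red G <-> [set x; y] \in R) /\
    ([set x; y] \in blue G <-> [set x; y] \in B).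

Definition cc_hourglass (T : finType) (G : tcgraph T) (u v w z1 z2 : T) : Prop :=
  uniq [:: u; v; w; z1; z2] /\
  let X := [set u; v; w; z1; z2] in
  let C1 := [set [set u; v]; [set u; z1]; [set v; z2]] in
  let C2 := [set [set v; w]; [set v; z1]; [set w; z2]] in
  induced_exactly G X C2 C1 \/ induced_exactly G X C1 C2.

(* Main.v *)
Require Import Defs.
From mathcomp Require Import all_boot all_order all_algebra.
From mathcomp Require Import zify.
Import GRing.Theory Num.Theory.
Set Implicit Arguments. Unset Strict Implicit.

Lemma set2_eqE (T : finType) (a b c d : T) :
  ([set a; b] == [set c; d]) = ((a == c) && (b == d)) || ((a == d) && (b == c)).
Proof.
apply/idP/idP.
- move/eqP=> E.
  have ha : a \in [set c; d] by rewrite -E !inE eqxx.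
  have hb : b \in [set c; d] by rewrite -E !inE eqxx orbT.
  have hc : c \in [set a; b] by rewrite E !inE eqxx.
  have hd : d \in [set a; b] by rewrite E !inE eqxx orbT.
  move: ha hb hc hd; rewrite !inE.
  case/orP=> /eqP E1; case/orP=> /eqP E2; case/orP=> /eqP E3; case/orP=> /eqP E4;
  subst; rewrite ?eqxx ?orbT //.
- case/orP=> /andP[/eqP-> /eqP->] //; by rewrite setUC.
Qed.

Lemma edges_del (T : finType) (G : tcgraph T) (F : {set {set T}}) : edges (del_edges G F) = edges G :\: F.
Proof. by apply/setP=> x; rewrite /edges /= !inE; case: (x \in F). Qed.

Lemma del_del (T : finType) (G : tcgraph T) (F S : {set {set T}}) :
  F \subset S -> del_edges (del_edges G F) (S :\: F) = del_edges G S.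
Proof.
move=> /subsetP FS; rewrite /del_edges /=; congr TCGraph; apply/setP=> x; rewrite !inE;
have := FS x; case: (x \in F); case: (x \in S) => //= /(_ isT) //; case: (x \in red G); case: (x \in blue G).
Qed.

Lemma del_union (T : finType) (G : tcgraph T) (F S : {set {set T}}) :
  del_edges (del_edges G F) S = del_edges G (S :|: F).
Proof.
rewrite /del_edges /=; congr TCGraph; apply/setP=> x; rewrite !inE;
by case: (x \in F); case: (x \in S).
Qed.

Lemma back (T : finType) (G : tcgraph T) (F : {set {set T}}) (n k : int) :
  F \subset edges G -> (#|F|%:Z <= n)%R ->
  yes_instance (del_edges G F) (k - n)%R -> yes_instance G k.
Proof.
move=> FE Fn [S [SE [Sk Sf]]].
exists (S :|: F); split; [|split].
- rewrite subUset FE andbT; apply: subset_trans SE _; rewrite edges_del; exact: subsetDl.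
- have := leq_card_setU S F => /= [[h _]]. move: h Sk Fn. set a := #|_ :|: _|. set b := #|S|. set c := #|F|. lia.
- by rewrite -del_union.
Qed.

Lemma fwd (T : finType) (G : tcgraph T) (F S : {set {set T}}) (n k : int) :
  S \subset edges G -> (#|S|%:Z <= k)%R -> P3_free (del_edges G S) ->
  F \subset S -> (n <= #|F|%:Z)%R ->
  yes_instance (del_edges G F) (k - n)%R.
Proof.
move=> SE Sk Sf FS nF; exists (S :\: F); split; [|split].
- by rewrite edges_del setSD.
- rewrite cardsDS //; have := subset_leq_card FS; lia.
- by rewrite del_del.
Qed.

Definition bic (T : finType) (G : tcgraph T) (a b c : T) :=
  ([set a; b] \in red G /\ [set b; c] \in blue G) \/
  ([set a; b] \in blue G /\ [set b; c] \in red G).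
Arguments bic {T}.

Lemma bic_edges (T : finType) (G : tcgraph T) a b c :
  bic G a b c -> [set a; b] \in edges G /\ [set b; c] \in edges G.
Proof. by rewrite /edges; case=> [[h1 h2]|[h1 h2]]; rewrite !inE h1 h2 ?orbT. Qed.

Lemma must (T : finType) (G : tcgraph T) (S : {set {set T}}) a b c :
  P3_free (del_edges G S) -> a != b -> b != c -> a != c ->
  bic G a b c -> [set a; c] \in S \/ [set a; c] \notin edges G ->
  [set a; b] \in S \/ [set b; c] \in S.
Proof.
move=> Sf ab bc ac Hb Hac.
case abS: ([set a; b] \in S); first by left.
case bcS: ([set b; c] \in S); first by right.
exfalso; apply: (Sf a b c); split => //.
- case: Hb => [[h1 h2]|[h1 h2]]; [left|right]; by rewrite /= !inE abS bcS h1 h2.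
- rewrite edges_del inE negb_and negbK; case: Hac => ->; by rewrite ?orbT.
Qed.

Lemma core (T : finType) (G : tcgraph T) (k : int) (u v w z1 z2 : T) :
  uniq [:: u; v; w; z1; z2] ->
  bic G u v w -> bic G z1 v z2 -> bic G u z1 v ->
  [set u; w] \notin edges G -> [set z1; z2] \notin edges G ->
  (yes_instance G k <->
    [\/ yes_instance (del_edges G [set [set v; w]]) (k - 1)%R,
        yes_instance (del_edges G [set [set u; v]; [set v; z1]]) (k - 2)%R
      | yes_instance (del_edges G [set [set u; v]; [set u; z1]; [set v; z2]]) (k - 3)%R]).
Proof.
move=> U.
have uv : u != v by move: U; apply: contraTN => /eqP ->; rewrite /= !inE !eqxx /= ?orbT /= ?andbF.
have uw : u != w by move: U; apply: contraTN => /eqP ->; rewrite /= !inE !eqxx /= ?orbT /= ?andbF.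
have uz1 : u != z1 by move: U; apply: contraTN => /eqP ->; rewrite /= !inE !eqxx /= ?orbT /= ?andbF.
have uz2 : u != z2 by move: U; apply: contraTN => /eqP ->; rewrite /= !inE !eqxx /= ?orbT /= ?andbF.
have vw : v != w by move: U; apply: contraTN => /eqP ->; rewrite /= !inE !eqxx /= ?orbT /= ?andbF.
have vz1 : v != z1 by move: U; apply: contraTN => /eqP ->; rewrite /= !inE !eqxx /= ?orbT /= ?andbF.
have vz2 : v != z2 by move: U; apply: contraTN => /eqP ->; rewrite /= !inE !eqxx /= ?orbT /= ?andbF.
have wz1 : w != z1 by move: U; apply: contraTN => /eqP ->; rewrite /= !inE !eqxx /= ?orbT /= ?andbF.
have wz2 : w != z2 by move: U; apply: contraTN => /eqP ->; rewrite /= !inE !eqxx /= ?orbT /= ?andbF.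
have z12 : z1 != z2 by move: U; apply: contraTN => /eqP ->; rewrite /= !inE !eqxx /= ?orbT /= ?andbF.
have vu := uv; rewrite eq_sym in vu. have z1v := vz1; rewrite eq_sym in z1v.
move=> B1 B2 B3 N1 N2.
have [E1 E2] := bic_edges B1. have [E3 E4] := bic_edges B2. have [E5 E6] := bic_edges B3.
have E3' : [set v; z1] \in edges G by rewrite setUC.
have Z : forall A B : {set T}, A = B -> (A == B) = true by move=> ?? ->; rewrite eqxx.
have neqs := (negbTE uv, negbTE uw, negbTE uz1, negbTE uz2, negbTE vw, negbTE vz1,
  negbTE vz2, negbTE wz1, negbTE wz2, negbTE z12).
have neqs' := (negbTE vu, negbTE z1v).
have ruv := uv; rewrite eq_sym in ruv.
have ruw := uw; rewrite eq_sym in ruw.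
have ruz1 := uz1; rewrite eq_sym in ruz1.
have ruz2 := uz2; rewrite eq_sym in ruz2.
have rvw := vw; rewrite eq_sym in rvw.
have rvz1 := vz1; rewrite eq_sym in rvz1.
have rvz2 := vz2; rewrite eq_sym in rvz2.
have rwz1 := wz1; rewrite eq_sym in rwz1.
have rwz2 := wz2; rewrite eq_sym in rwz2.
have rz12 := z12; rewrite eq_sym in rz12.
have neqs'' := (negbTE ruv, negbTE ruw, negbTE ruz1, negbTE ruz2, negbTE rvw, negbTE rvz1, negbTE rvz2, negbTE rwz1, negbTE rwz2, negbTE rz12).
split.
- case=> S [SE [Sk Sf]].
  have SS : forall x, x \in S -> x \in S by [].
  case vwS: ([set v; w] \in S).
    apply: Or31; apply: (fwd SE Sk Sf); first by rewrite sub1set.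
    by rewrite cards1.
  have uvS : [set u; v] \in S.
    by case: (must Sf uv vw uw B1 (or_intror N1)) => //; rewrite vwS.
  case vz1S: ([set v; z1] \in S).
    apply: Or32; apply: (fwd SE Sk Sf).
      by apply/subsetP=> x; rewrite !inE => /orP[]/eqP->.
    by rewrite cards2 set2_eqE ?neqs ?neqs'.
  have vz2S : [set v; z2] \in S.
    case: (must Sf z1v vz2 z12 B2 (or_intror N2)) => //.
    by rewrite setUC vz1S.
  have uz1S : [set u; z1] \in S.
    case: (must Sf uz1 z1v uv B3 (or_introl uvS)) => //.
    by rewrite setUC vz1S.
  apply: Or33; apply: (fwd SE Sk Sf).
    by apply/subsetP=> x; rewrite !inE => /orP[/orP[]|]/eqP->.
  rewrite setUC cardsU1 cards2 !inE !set2_eqE ?neqs ?neqs' ?neqs'' ?eqxx //.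
- case=> H.
  + apply: (back _ _ H); first by rewrite sub1set. by rewrite cards1.
  + apply: (back _ _ H).
      by apply/subsetP=> x Hx; rewrite !inE in Hx; case/orP: Hx => /eqP->.
    by rewrite cards2; case: (_ != _).
  + apply: (back _ _ H).
      by apply/subsetP=> x Hx; rewrite !inE in Hx; case/orP: Hx => [/orP[]|]/eqP->.
    rewrite setUC cardsU1 cards2; by case: (_ \notin _); case: (_ != _).
Qed.

Lemma ie_bool (T : finType) (G : tcgraph T) (X : {set T}) R B :
  induced_exactly G X R B ->
  (forall x y, x \in X -> y \in X -> x != y -> ([set x; y] \in red G) = ([set x; y] \in R)) /\
  (forall x y, x \in X -> y \in X -> x != y -> ([set x; y] \in blue G) = ([set x; y] \in B)).
Proof.
move=> HI; split=> x y hx hy hxy; have [h1 h2] := HI x y hx hy hxy; apply/idP/idP;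
by [move/h1|move/h2].
Qed.

Unset Implicit Arguments.

Theorem lemma7 (T : finType) (G : tcgraph T) (k : int) (u v w z1 z2 : T) :
  wf_tcgraph G ->
  cc_hourglass G u v w z1 z2 ->
  (yes_instance G k <->
    [\/ yes_instance (del_edges G [set [set v; w]]) (k - 1)%R,
        yes_instance (del_edges G [set [set u; v]; [set v; z1]]) (k - 2)%R
      | yes_instance (del_edges G [set [set u; v]; [set u; z1]; [set v; z2]]) (k - 3)%R]).
Proof.
move=> _ [U H].
have uv : u != v by move: U; apply: contraTN => /eqP ->; rewrite /= !inE !eqxx /= ?orbT /= ?andbF.
have uw : u != w by move: U; apply: contraTN => /eqP ->; rewrite /= !inE !eqxx /= ?orbT /= ?andbF.
have uz1 : u != z1 by move: U; apply: contraTN => /eqP ->; rewrite /= !inE !eqxx /= ?orbT /= ?andbF.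
have uz2 : u != z2 by move: U; apply: contraTN => /eqP ->; rewrite /= !inE !eqxx /= ?orbT /= ?andbF.
have vw : v != w by move: U; apply: contraTN => /eqP ->; rewrite /= !inE !eqxx /= ?orbT /= ?andbF.
have vz1 : v != z1 by move: U; apply: contraTN => /eqP ->; rewrite /= !inE !eqxx /= ?orbT /= ?andbF.
have vz2 : v != z2 by move: U; apply: contraTN => /eqP ->; rewrite /= !inE !eqxx /= ?orbT /= ?andbF.
have wz1 : w != z1 by move: U; apply: contraTN => /eqP ->; rewrite /= !inE !eqxx /= ?orbT /= ?andbF.
have wz2 : w != z2 by move: U; apply: contraTN => /eqP ->; rewrite /= !inE !eqxx /= ?orbT /= ?andbF.
have z12 : z1 != z2 by move: U; apply: contraTN => /eqP ->; rewrite /= !inE !eqxx /= ?orbT /= ?andbF.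
have ruv := uv; rewrite eq_sym in ruv.
have ruw := uw; rewrite eq_sym in ruw.
have ruz1 := uz1; rewrite eq_sym in ruz1.
have ruz2 := uz2; rewrite eq_sym in ruz2.
have rvw := vw; rewrite eq_sym in rvw.
have rvz1 := vz1; rewrite eq_sym in rvz1.
have rvz2 := vz2; rewrite eq_sym in rvz2.
have rwz1 := wz1; rewrite eq_sym in rwz1.
have rwz2 := wz2; rewrite eq_sym in rwz2.
have rz12 := z12; rewrite eq_sym in rz12.
have neqs := (negbTE uv, negbTE uw, negbTE uz1, negbTE uz2, negbTE vw, negbTE vz1, negbTE vz2, negbTE wz1, negbTE wz2, negbTE z12).
have neqs' := (negbTE ruv, negbTE ruw, negbTE ruz1, negbTE ruz2, negbTE rvw, negbTE rvz1, negbTE rvz2, negbTE rwz1, negbTE rwz2, negbTE rz12).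
case: H => /ie_bool [HR HB]; apply: core => //;
  rewrite /bic /edges ?inE !HR ?HB; try solve [by rewrite !inE eqxx ?orbT | done];
  rewrite !inE !set2_eqE ?neqs ?neqs' ?eqxx //=;
  first [by left | by right].
Qed.
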